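(* Consider the discrete-time system $x_{k+1}=(I-\varepsilon\Delta)x_k+\varepsilon\pi A\psi(x_k)$, with $\varepsilon>0$, $\pi>0$, and each $\psi_i$ satisfying (A1)–(A4). If $x^*\neq0$ is an equilibrium point of this system, then $\pi>\pi_1=\frac{1}{1-\lambda_1(\mathcal L)}$.
   Context: Let $\mathcal G$ be an undirected, connected signed graph on $n$ nodes without self-loops, with symmetric adjacency matrix $A=[a_{ij}]$ having zero diagonal and entries of either sign. Let $\delta_i=\sum_j|a_{ij}|>0$, $\Delta=\mathrm{diag}(\delta_i)$, and $\mathcal L=I-\Delta^{-1}A$, with real eigenvalues $\lambda_1(\mathcal L)\le\dots\le\lambda_n(\mathcal L)$. Each $\psi_i:\mathbb R\to\mathbb R$ is smooth and satisfies: (A1) $\psi_i$ is odd; (A2) $\psi_i'>0$ everywhere and $\psi_i'(0)=1$; (A3) $\lim_{s\to\pm\infty}\psi_i(s)=\pm1$; (A4) $\psi_i$ is strictly convex for $s<0$ and strictly concave for $s>0$. Here $\psi(x)=(\psi_1(x_1),\dots,\psi_n(x_n))^T$. *)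

(* Defs.v *)
From HB Require Import structures.
From mathcomp Require Import all_boot all_order all_algebra.
From mathcomp Require Import all_classical all_reals all_analysis.
Set Implicit Arguments. Unset Strict Implicit. Unset Printing Implicit Defensive.
Import Order.TTheory GRing.Theory Num.Theory.
Import numFieldNormedType.Exports.
Local Open Scope classical_set_scope.
Local Open Scope ring_scope.

Definition smooth (R : realType) (f : R -> R) : Prop :=
  forall (k : nat) (x : R), derivable (derive1n k f) x 1.

Definition nonlin_A1_A4 (R : realType) (f : R -> R) : Prop :=
  smooth f /\
  (forall s, f (- s) = - f s) /\
  (forall s, 0 < derive1 f s) /\ derive1 f 0 = 1 /\
  (f s @[s --> +oo] --> (1 : R)) /\ (f s @[s --> -oo] --> (-1 : R)) /\
  (forall x y t : R, x < 0 -> y < 0 -> x != y -> 0 < t -> t < 1 ->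
     f (t * x + (1 - t) * y) < t * f x + (1 - t) * f y) /\
  (forall x y t : R, 0 < x -> 0 < y -> x != y -> 0 < t -> t < 1 ->
     t * f x + (1 - t) * f y < f (t * x + (1 - t) * y)).

Definition degw (R : realType) (n : nat) (A : 'M[R]_n) (i : 'I_n) : R :=
  \sum_(j < n) `|A i j|.

Definition DegMx (R : realType) (n : nat) (A : 'M[R]_n) : 'M[R]_n :=
  diag_mx (\row_i degw A i).

Definition sLap (R : realType) (n : nat) (A : 'M[R]_n) : 'M[R]_n :=
  1%:M - invmx (DegMx A) *m A.

Definition is_min_eigenvalue (R : realType) (n : nat) (M : 'M[R]_n) (lam : R) : Prop :=
  eigenvalue M lam /\ forall mu : R, eigenvalue M mu -> lam <= mu.

Definition signed_graph_ok (R : realType) (n : nat) (A : 'M[R]_n) : Prop :=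
  A^T = A /\ (forall i, A i i = 0) /\ (forall i, 0 < degw A i) /\
  (forall i j : 'I_n, connect (fun u v => A u v != 0) i j).

Definition psi_vec (R : realType) (n : nat) (psi : 'I_n -> R -> R) (x : 'cV[R]_n)
  : 'cV[R]_n := \col_i psi i (x i 0).

Definition step (R : realType) (n : nat) (A : 'M[R]_n) (psi : 'I_n -> R -> R)
  (eps pi : R) (x : 'cV[R]_n) : 'cV[R]_n :=
  (1%:M - eps *: DegMx A) *m x + (eps * pi) *: (A *m psi_vec psi x).

(* Main.v *)
Require Import Defs.
From HB Require Import structures.
From mathcomp Require Import all_boot all_order all_algebra.
From mathcomp Require Import all_classical all_reals all_analysis.
From mathcomp Require Import lra ring.
Import Order.TTheory GRing.Theory Num.Theory.
Local Open Scope ring_scope.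

Module Helpers.
Import numFieldNormedType.Exports.
Set Implicit Arguments. Unset Strict Implicit. Unset Printing Implicit Defensive.
Section Main.
Local Open Scope classical_set_scope.
Local Open Scope ring_scope.
Variable R : realType.


Definition qf n (Q : 'M[R]_n) (u : 'rV[R]_n) : R := (u *m Q *m u^T) 0 0.

Lemma qf_sum n (Q : 'M[R]_n) u : qf Q u = \sum_k (\sum_i u 0 i * Q i k) * u 0 k.
Proof. by rewrite /qf !mxE; apply: eq_bigr => k _; rewrite !mxE. Qed.

Lemma cont_sum (T : topologicalType) (I : Type) (s : seq I) (f : I -> T -> R) :
  (forall i, continuous (f i)) -> continuous (fun x => \sum_(i <- s) f i x).
Proof.
move=> hf; elim: s => [|a s IH].
  under eq_fun do rewrite big_nil; exact: cst_continuous.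
under eq_fun do rewrite big_cons.
by move=> x; apply: continuousD; [exact: hf | exact: IH].
Qed.

Lemma qf_cont n (Q : 'M[R]_n) : continuous (qf Q).
Proof.
have -> : qf Q = fun u => \sum_k (\sum_i u 0 i * Q i k) * u 0 k.
  by apply: funext => u; exact: qf_sum.
apply: cont_sum => k x; apply: continuousM; last exact: coord_continuous.
by apply: cont_sum => i y; apply: continuousM; [exact: coord_continuous| exact: cst_continuous].
Qed.



Lemma qfD n (d u : 'rV[R]_n) : qf (diag_mx d) u = \sum_i d 0 i * u 0 i ^+ 2.
Proof.
rewrite /qf mul_mx_diag !mxE; apply: eq_bigr => i _; rewrite !mxE; lra.
Qed.

Lemma qfZ n (Q : 'M[R]_n) k u : qf Q (k *: u) = k ^+ 2 * qf Q u.
Proof.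
by rewrite /qf -scalemxAl linearZ /= -scalemxAr -scalemxAl !mxE mulrA expr2.
Qed.

Lemma qf0 n (Q : 'M[R]_n) : qf Q 0 = 0.
Proof. by rewrite /qf mul0mx mul0mx mxE. Qed.

Lemma rV_neq0 n (u : 'rV[R]_n) : u != 0 -> exists i, u 0 i != 0.
Proof.
move=> /eqP hu; apply: contrapT => hn; apply: hu; apply/rowP => i.
rewrite mxE; apply/eqP; apply: contrapT => h; apply: hn; exists i; exact/negP.
Qed.

Lemma term_le_sum n (F : 'I_n -> R) i : (forall j, 0 <= F j) -> F i <= \sum_j F j.
Proof.
move=> h; rewrite (bigD1 i) //= lerDl; apply: sumr_ge0 => j _; exact: h.
Qed.

Lemma qfD_gt0 n (d u : 'rV[R]_n) : (forall i, 0 < d 0 i) -> u != 0 ->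
  0 < qf (diag_mx d) u.
Proof.
move=> hd /rV_neq0 [i hi]; rewrite qfD.
have hF : forall j, 0 <= d 0 j * u 0 j ^+ 2.
  by move=> j; apply: mulr_ge0; [exact: ltW | exact: sqr_ge0].
apply: (lt_le_trans _ (term_le_sum i hF)).
by rewrite mulr_gt0 ?hd // lt_def sqrf_eq0 hi sqr_ge0.
Qed.

Lemma rayleigh_max n (A : 'M[R]_n) (d y : 'rV[R]_n) : (forall i, 0 < d 0 i) -> y != 0 ->
  exists2 v : 'rV[R]_n, qf (diag_mx d) v = 1 & forall u, qf A u <= qf A v * qf (diag_mx d) u.
Proof.
move=> hd hy.
set D := diag_mx d.
have norm1 : forall u : 'rV[R]_n, u != 0 ->
    qf D ((Num.sqrt (qf D u))^-1 *: u) = 1.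
  move=> u hu; have hG := qfD_gt0 hd hu.
  rewrite qfZ exprVn sqr_sqrtr ?ltW // mulVf //; exact: lt0r_neq0.
pose K := [set u : 'rV[R]_n | qf D u = 1].
have K0 : K !=set0 by exists ((Num.sqrt (qf D y))^-1 *: y); exact: norm1.
have Kc : compact K.
  have Kcl : closed K.
    apply: (@preimage_closed _ _ (qf D) [set 1]); first by move=> u _; exact: qf_cont.
    exact: closed_eq.
  apply: bounded_closed_compact Kcl.
  pose B := 1 + \sum_k (d 0 k)^-1.
  have hB0 : 0 <= \sum_k (d 0 k)^-1.
    by apply: sumr_ge0 => k _; rewrite invr_ge0 ltW.
  apply: filterS (nbhs_pinfty_ge (r := B) _); last by rewrite num_real.
  move=> M hM u Ku /=.
  rewrite [`|u|]/Num.norm /= mx_normrE; apply: bigmax_le.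
    by apply: le_trans hM; rewrite /B; lra.
  move=> [i j] _ /=; rewrite (ord1 i); apply: le_trans hM.
  have h1 : d 0 j * u 0 j ^+ 2 <= 1.
    rewrite -Ku /= qfD; apply: (term_le_sum (F := fun k => d 0 k * u 0 k ^+ 2)).
    by move=> k; apply: mulr_ge0; [exact: ltW | exact: sqr_ge0].
  have h2 : u 0 j ^+ 2 <= (d 0 j)^-1.
    have hdj := hd j.
    have -> : u 0 j ^+ 2 = (d 0 j)^-1 * (d 0 j * u 0 j ^+ 2).
      by rewrite mulrA mulVf ?mul1r // lt0r_neq0.
    rewrite -[X in _ <= X]mulr1; apply: ler_wpM2l => //.
    by rewrite invr_ge0 ltW.
  have h3 : (d 0 j)^-1 <= \sum_k (d 0 k)^-1.
    by apply: (term_le_sum (F := fun k => (d 0 k)^-1)) => k; rewrite invr_ge0 ltW.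
  rewrite /B; have [hle|hgt] := leP `|u 0 j| 1; first lra.
  have : `|u 0 j| <= u 0 j ^+ 2.
    by rewrite -real_normK ?num_real // expr2 ler_pMr ?ltW //; lra.
  lra.
have cf : {within K, continuous (qf A)}.
  by apply: continuous_subspaceT; exact: qf_cont.
have [v vK vmax] := compact_EVT_max K0 Kc cf.
have vK' : qf D v = 1 by move: vK; rewrite inE.
exists v => // u.
have [->|hu] := eqVneq u 0; first by rewrite !qf0 mulr0.
have hG := qfD_gt0 hd hu.
have := vmax _ (mem_set (norm1 _ hu)).
rewrite qfZ exprVn (sqr_sqrtr (ltW hG)) => h.
by move: h; rewrite mulrC ler_pdivrMr.
Qed.


Lemma qf_expand n (Q : 'M[R]_n) (v w : 'rV[R]_n) t : Q^T = Q ->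
  qf Q (v + t *: w) = qf Q v + 2 * t * (v *m Q *m w^T) 0 0 + t ^+ 2 * qf Q w.
Proof.
move=> hQ.
have hsym : (w *m Q *m v^T) = (v *m Q *m w^T).
  have e : forall M : 'M[R]_1, M = M^T.
    by move=> M; apply/matrixP => i j; rewrite mxE !ord1.
  by rewrite [LHS]e !trmx_mul trmxK hQ mulmxA.
rewrite /qf linearD /= linearZ /= !mulmxDl !mulmxDr -!scalemxAl -!scalemxAr hsym.
move: (v *m Q *m v^T) (v *m Q *m w^T) (w *m Q *m w^T) => X Y Z.
rewrite !mxE; ring.
Qed.

Lemma lagrange n (Q : 'M[R]_n) (v : 'rV[R]_n) : Q^T = Q ->
  (forall u, 0 <= qf Q u) -> qf Q v = 0 -> v *m Q = 0.
Proof.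
move=> hQ hpos hv; apply/rowP => j; rewrite [RHS]mxE.
pose w : 'rV[R]_n := delta_mx 0 j.
have hb : (v *m Q *m w^T) 0 0 = (v *m Q) 0 j.
  by rewrite /w trmx_delta -colE mxE.
set b : R := (v *m Q *m w^T) 0 0 in hb.
set a := qf Q w.
have ha : 0 <= a by exact: hpos.
pose t : R := - b / (a + 1).
have ha1 : 0 < a + 1 by apply: (le_lt_trans ha); rewrite ltrDl.
have ht : t * (a + 1) = - b by rewrite /t mulrVK // unitfE gt_eqF.
have := hpos (v + t *: w); rewrite qf_expand // hv -/a -/b => h.
rewrite -hb.
have hb' : b = - (t * (a + 1)) by rewrite ht opprK.
rewrite hb' in h *; clear hb hb' ht hpos hQ hv.
have : t ^+ 2 * (a + 2) <= 0 by nra.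
move=> h2.
have : t = 0 by nra.
by move=> ->; rewrite mul0r oppr0.
Qed.
Lemma qf_lin n (D A : 'M[R]_n) mu u : qf (mu *: D - A) u = mu * qf D u - qf A u.
Proof.
rewrite /qf mulmxBr mulmxBl -scalemxAr -scalemxAl.
by move: (u *m D *m u^T) (u *m A *m u^T) => X Y; rewrite !mxE.
Qed.

Lemma rayleigh_eig n (A : 'M[R]_n) (d y : 'rV[R]_n) : A^T = A ->
  (forall i, 0 < d 0 i) -> y != 0 ->
  exists mu, eigenvalue (1%:M - invmx (diag_mx d) *m A) (1 - mu) /\
             qf A y <= mu * qf (diag_mx d) y.
Proof.
move=> hA hd hy.
have [v hv hmax] := rayleigh_max A hd hy.
set D := diag_mx d in hv hmax *.
exists (qf A v); split; last exact: hmax.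
set mu := qf A v in hmax *.
have hQ : (mu *: D - A)^T = mu *: D - A.
  by rewrite linearB /= linearZ /= tr_diag_mx hA.
have hpos : forall u, 0 <= qf (mu *: D - A) u.
  by move=> u; rewrite qf_lin subr_ge0.
have hv0 : qf (mu *: D - A) v = 0 by rewrite qf_lin hv mulr1 /mu subrr.
have hvQ := lagrange hQ hpos hv0.
have hvA : v *m A = mu *: (v *m D).
  by move/eqP: hvQ; rewrite mulmxBr -scalemxAr subr_eq0 => /eqP <-.
have Dunit : D \in unitmx.
  rewrite unitmxE /D det_diag unitfE; apply/prodf_neq0 => i _; exact: lt0r_neq0.
apply/eigenvalueP; exists (v *m D).
  rewrite mulmxBr mulmx1 mulmxA -(mulmxA v) mulmxV // mulmx1 hvA.
  by rewrite scalerBl scale1r.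
apply/eqP => h0.
have : v = 0 by rewrite -(mulmxK Dunit v) h0 mul0mx.
by move=> v0; move: hv; rewrite v0 /qf !mul0mx mxE => /eqP; rewrite eq_sym oner_eq0.
Qed.

Lemma cont_eps (f : R -> R) x : {for x, continuous f} ->
  forall e, 0 < e -> exists2 d, 0 < d & forall y, `|x - y| < d -> `|f x - f y| < e.
Proof.
move=> cf e e0.
have h := @cvgr_dist_lt _ _ _ (nbhs x) _ f (f x) cf e e0.
have [d d0 hd] := (nbhs_ballP x _).1 (h (nbhs_filter x)).
by exists d => // y hy; apply: hd.
Qed.

Lemma der_eps (f : R -> R) x : derivable f x 1 ->
  forall e, 0 < e -> exists2 d, 0 < d & forall h, 0 < h -> h < d ->
   `|derive1 f x - h^-1 * (f (h + x) - f x)| < e.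
Proof.
move=> df e e0.
have := df. rewrite /derivable. move=> /cvg_ex [l hl].
have hh := @cvgr_dist_lt _ _ _ (0^') _ _ l hl e e0.
have := hh (dnbhs_filter 0).
rewrite near_withinE => hn.
have [d d0 hd] := (nbhs_ballP 0 _).1 hn.
exists d => // h h0 hd'.
have e1 : derive1 f x = l.
  rewrite derive1E /derive; exact: (cvg_lim _ hl).
rewrite e1.
have := hd h; rewrite -ball_normE /= sub0r normrN gtr0_norm // => /(_ hd').
move=> /(_ (lt0r_neq0 h0)).
by rewrite /shift /= [h%:A]mulr1.
Qed.
Lemma small_pos (a b : R) : 0 < a -> 0 < b -> exists u, [/\ 0 < u, u < a & u < b].
Proof.
move=> a0 b0; have [ab|ba] := leP a b.
  by exists (a / 2); split; lra.
by exists (b / 2); split; lra.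
Qed.

Lemma psi_facts (f : R -> R) : nonlin_A1_A4 f ->
  f 0 = 0 /\ (forall s, 0 < s -> 0 < f s /\ f s < s).
Proof.
move=> [hs [hodd [hd' [hd0 [_ [_ [_ hconc]]]]]]].
have der : forall x, derivable f x 1 by move=> x; exact: (hs 0%N x).
have cont : continuous f.
  by move=> x; apply: differentiable_continuous; apply/derivable1_diffP.
have f0 : f 0 = 0 by have := hodd 0; rewrite oppr0; lra.
split => //.
have W : forall s t, 0 < t -> t < s -> f s / s * t <= f t.
  move=> s t t0 ts; set k := f s / s.
  have s0 : 0 < s by lra.
  have hks : k * s = f s by rewrite /k divfK // gt_eqF.
  rewrite leNgt; apply/negP => hlt.
  set m := k * t - f t.
  have m0 : 0 < m by rewrite /m; lra.
  have ch : continuous (fun u => f u - k * u).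
    move=> x; apply: continuousB; first exact: cont.
    by apply: continuousM; [exact: cst_continuous | exact: cvg_id].
  have [d d0 hd] := cont_eps (ch 0) m0.
  have [u [u0 ud ut]] := small_pos d0 t0.
  have hu := hd u; rewrite sub0r normrN gtr0_norm // f0 mulr0 subr0 sub0r in hu.
  have {hu} hu := hu ud.
  have hu' : k * u - m < f u.
    have := ltr_normlW hu; lra.
  pose lam := (s - t) / (s - u).
  have su : 0 < s - u by lra.
  have hlam : lam * (s - u) = s - t by rewrite /lam divfK // gt_eqF.
  have lam0 : 0 < lam by rewrite /lam divr_gt0 //; lra.
  have lam1 : lam < 1 by rewrite /lam ltr_pdivrMr //; lra.
  have us : u != s by rewrite (lt_eqF (lt_trans ut ts)).
  have hc := hconc u s lam u0 s0 us lam0 lam1.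
  have ht : lam * u + (1 - lam) * s = t.
    by rewrite mulrBl mul1r; lra.
  rewrite ht in hc.
  have h1 : lam * (k * u - m) <= lam * f u by apply: ler_wpM2l; lra.
  have h2 : k * t = lam * (k * u) + (1 - lam) * (k * s).
    by rewrite -ht; ring.
  have h3 : lam * (k * u - m) = lam * (k * u) - lam * m by ring.
  have h4 : lam * m < m by rewrite gtr_pMl.
  rewrite hks in h2.
  have hm : m = k * t - f t by [].
  clearbody m k lam; lra.
have incr : forall x y, x < y -> f x < f y.
  move=> x y xy; apply: (@gtr0_derive1_incr _ f x y) => //.
  exact: continuous_subspaceT.
have S : forall s, 0 < s -> f s / s * (s / 2) < f (s / 2).
  move=> s s0.
  have hw := W s (s / 4) ltac:(lra) ltac:(lra).
  have hc := hconc (s / 4) s (2 / 3) ltac:(lra) s0 ltac:(rewrite lt_eqF //; lra)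
     ltac:(lra) ltac:(lra).
  have e : 2 / 3 * (s / 4) + (1 - 2 / 3) * s = s / 2 by field.
  rewrite e in hc.
  have hks : f s / s * s = f s by rewrite divfK // gt_eqF.
  move: hw hc hks; move: (f s / s) => k; lra.
move=> s s0; split; first by rewrite -f0; exact: incr.
rewrite ltNge; apply/negP => hge.
set k := f s / s.
have hks : k * s = f s by rewrite /k divfK // gt_eqF.
have k1 : 1 <= k.
  have : 1 * s <= k * s by rewrite hks mul1r.
  by rewrite ler_pM2r.
set k' := f (s / 2) / (s / 2).
have s2 : 0 < s / 2 by lra.
have hk's : k' * (s / 2) = f (s / 2) by rewrite /k' divfK // gt_eqF.
have kk : k < k'.
  have := S s s0; rewrite -/k -hk's ltr_pM2r //.
have [d d0 hd] := der_eps (der 0) (ltac:(lra) : 0 < k' - 1).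
have [h [h0 hd1 hsh]] := small_pos d0 s2.
have hw := W (s / 2) h h0 hsh; rewrite -/k' in hw.
have := hd h h0 hd1; rewrite hd0 addr0 f0 subr0 ltr_norml => /andP [hq _].
have hf : h^-1 * f h * h = f h by rewrite mulrAC mulVf ?mul1r // gt_eqF.
have hqk : h^-1 * f h < k' by lra.
have : h^-1 * f h * h < k' * h by rewrite ltr_pM2r.
rewrite hf; lra.
Qed.

Lemma cV_neq0 n (u : 'cV[R]_n) : u != 0 -> exists i, u i 0 != 0.
Proof.
move=> /eqP hu; apply: contrapT => hn; apply: hu; apply/colP => i.
rewrite mxE; apply/eqP; apply: contrapT => h; apply: hn; exists i; exact/negP.
Qed.

Lemma psi_sq (f : R -> R) : nonlin_A1_A4 f ->
  f 0 = 0 /\ forall s, s != 0 -> f s ^+ 2 < f s * s.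
Proof.
move=> hf; have [f0 hpos] := psi_facts hf.
have hodd : forall s, f (- s) = - f s by case: hf => _ [].
split => // s hs.
have [s0|s0] := ltP 0 s.
  by have [h1 h2] := hpos s s0; rewrite expr2 ltr_pM2l.
have sn : s < 0 by rewrite lt_neqAle hs s0.
have [h1 h2] := hpos (- s) ltac:(lra).
rewrite hodd in h1 h2.
rewrite expr2; nra.
Qed.

Theorem lemma3_aux (n : nat) (A : 'M[R]_n) (psi : 'I_n -> R -> R)
  (eps pi lam1 : R) (xs : 'cV[R]_n) :
  signed_graph_ok A ->
  (forall i, nonlin_A1_A4 (psi i)) ->
  0 < eps -> 0 < pi ->
  is_min_eigenvalue (sLap A) lam1 ->
  step A psi eps pi xs = xs ->
  xs != 0 ->
  pi > 1 / (1 - lam1).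
Proof.
move=> [hsym [_ [hdeg _]]] hpsi heps hpi [_ hmin] heq hx.
pose d : 'rV[R]_n := \row_i degw A i.
have hD : DegMx A = diag_mx d by [].
have hd : forall i, 0 < d 0 i by move=> i; rewrite mxE.
set p := psi_vec psi xs in heq.
have hDx : DegMx A *m xs = pi *: (A *m p).
  move: heq; rewrite /step mulmxBl mul1mx -scalemxAl.
  move: (DegMx A *m xs) (A *m p) => X Y heq.
  apply/matrixP => i j; move/matrixP: heq => /(_ i j); rewrite !mxE => h.
  apply: (mulfI (lt0r_neq0 heps)); lra.
pose y := p^T.
have [i0 hi0] := cV_neq0 hx.
have hp : forall i, p i 0 = psi i (xs i 0) by move=> i; rewrite mxE.
have hy0 : y != 0.
  apply/eqP => /matrixP /(_ 0 i0); rewrite !mxE => h.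
  have [_ hs] := psi_sq (hpsi i0); have := hs _ hi0; rewrite h expr2; lra.
have S1 : qf (DegMx A) y < (y *m DegMx A *m xs) 0 0.
  rewrite hD qfD mul_mx_diag !mxE.
  rewrite (bigD1 i0) //= [X in _ < X](bigD1 i0) //=.
  apply: ltr_leD.
    rewrite !mxE -hp; have [_ hs] := psi_sq (hpsi i0); have := hs _ hi0.
    rewrite -hp => h; rewrite (mulrC (p i0 0)) -mulrA; by rewrite ltr_pM2l.
  apply: ler_sum => i _; rewrite !mxE.
  have [f0 hs] := psi_sq (hpsi i).
  have [->|hxi] := eqVneq (xs i 0) 0.
    by rewrite f0 expr2 !mulr0.
  have := hs _ hxi => h.
  rewrite (mulrC (psi i _)) -mulrA; apply: ler_wpM2l; [exact: ltW | exact: ltW].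
have S2 : (y *m DegMx A *m xs) 0 0 = pi * qf A y.
  rewrite -mulmxA hDx -scalemxAr /qf trmxK mulmxA.
  by move: (y *m A *m p) => M; rewrite mxE.
have [mu [heig hle]] := rayleigh_eig hsym hd hy0.
have hl := hmin _ heig.
have hG := qfD_gt0 hd hy0.
rewrite -hD in hle hG.
move: S1 hle hG; rewrite S2.
move: (qf (DegMx A) y) (qf A y) => G F h1 h2 h3.
have h4 : pi * F <= pi * (mu * G) by apply: ler_wpM2l => //; exact: ltW.
have h5 : 1 < pi * mu.
  have : G * 1 < G * (pi * mu) by rewrite mulr1; lra.
  by rewrite ltr_pM2l.
have h6 : 0 < 1 - lam1 by nra.
rewrite ltr_pdivrMr //; nra.
Qed.
End Main.
End Helpers.

Theorem lemma3 (R : realType) (n : nat) (A : 'M[R]_n) (psi : 'I_n -> R -> R)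
  (eps pi lam1 : R) (xs : 'cV[R]_n) :
  signed_graph_ok A ->
  (forall i, nonlin_A1_A4 (psi i)) ->
  0 < eps -> 0 < pi ->
  is_min_eigenvalue (sLap A) lam1 ->
  step A psi eps pi xs = xs ->
  xs != 0 ->
  pi > 1 / (1 - lam1).
Proof. exact: Helpers.lemma3_aux. Qed.
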